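(* For every instance such that $|S_2|=2$ and $\pi_1+\pi_3+\pi_4-1=1$, we have $H^{PW''}\le \tfrac{360}{193}H^*$.
   Context: An instance consists of an integer $n\ge 1$ and growth rates $1=h(1)\ge h(2)\ge\cdots\ge h(n)>0$ of bamboos $b_1,\dots,b_n$. Bamboo Garden Trimming (discrete version): - All heights are $0$ initially. - On each day $t=1,2,\dots$ every bamboo $b_j$ grows by $h(j)$. - At the end of each day the gardener cuts exactly one bamboo $\sigma(t)\in\{1,\dots,n\}$ back to height $0$. The height of a schedule $\sigma:\mathbb{N}\to\{1,\dots,n\}$ is the supremum, over all days $t$ and all $j$, of the height of $b_j$ at the end of day $t$ just before the cut. $H^*$ denotes the infimum of this height over all schedules. Value of algorithm PW'': - Split $\{1,\dots,n\}$ into four sets: - $S_1=\{j: \tfrac23<h(j)\le 1\}$; - $S_2=\{j:\tfrac12<h(j)\le\tfrac23\}$; - $S_3=\{j: h(j)\le\tfrac12 \text{ and } \tfrac23 2^{-k}<h(j)\le 2^{-k}\text{ for some integer }k\ge1\}$; - $S_4=\{j: h(j)\le\tfrac12\text{ and } 2^{-(k+1)}<h(j)\le \tfrac23 2^{-k}\text{ for some integer }k\ge 1\}$. - Modified growths: $h''(j)=2^{-k}$ for $j\in S_3$ and $h''(j)=\tfrac23 2^{-k}$ for $j\in S_4$, with $k$ as in the definition of the set. - Let $\pi_1=|S_1|$, $sh_3=\sum_{j\in S_3}h''(j)$, $sh_4=\sum_{j\in S_4}h''(j)$, $\pi_3=\lfloor sh_3\rfloor$, $\pi_4=\lfloor sh_4\rfloor$,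 $f_3=sh_3-\pi_3$, $f_4=sh_4-\pi_4$. - Option (a): $\pi_R(a)=\lceil f_3+f_4\rceil$ and $z(a)=\pi_1+|S_2|+\pi_3+\pi_4+\pi_R(a)$. - Option (b): if $S_2=\emptyset$ put $z(b)=+\infty$. Otherwise let $h^*=\max_{j\in S_2}h(j)$ and $f_2=\tfrac12$ if $|S_2|$ is odd, $f_2=0$ if $|S_2|$ is even. Then $\pi_R(b)=\lceil f_2+f_3+f_4\rceil$ and $z(b)=2h^*\,(\pi_1+\lfloor |S_2|/2\rfloor+\pi_3+\pi_4+\pi_R(b))$. - The value returned by algorithm PW'' is $H^{PW''}=\min\{z(a),z(b)\}$. The paper takes this as the maximum height of the periodic pinwheel trimming schedule that it builds from these partitions. *)

(* Defs.v *)
From Stdlib Require Import Reals Lra Lia ZArith Arith List.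
Open Scope R_scope.

(* Growth rates are h : nat -> R, bamboo b_j has rate h j for 1 <= j <= n. *)
Definition valid_instance (n : nat) (h : nat -> R) : Prop :=
  (1 <= n)%nat /\ h 1%nat = 1 /\
  (forall j : nat, (1 <= j)%nat -> (j < n)%nat -> h (S j) <= h j) /\
  0 < h n.

(* A schedule: sigma t is the bamboo cut at the end of day t (t >= 1). *)
Definition valid_schedule (n : nat) (sigma : nat -> nat) : Prop :=
  forall t : nat, (1 <= t)%nat -> (1 <= sigma t)%nat /\ (sigma t <= n)%nat.

(* Height of b_j at the end of day t, after the cut of day t (day 0 = start). *)
Fixpoint height_after (h : nat -> R) (sigma : nat -> nat) (j t : nat) : R :=
  match t with
  | O => 0
  | S t' => if Nat.eqb (sigma (S t')) j then 0
            else height_after h sigma j t' + h j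
  end.

(* Height of b_j at the end of day t (t >= 1), just before the cut. *)
Definition height_before (h : nat -> R) (sigma : nat -> nat) (j t : nat) : R :=
  height_after h sigma j (Nat.pred t) + h j.

Definition schedule_bounded_by (n : nat) (h : nat -> R) (sigma : nat -> nat)
  (B : R) : Prop :=
  forall t j : nat, (1 <= t)%nat -> (1 <= j)%nat -> (j <= n)%nat ->
    height_before h sigma j t <= B.

Definition rleb (x y : R) : bool := if Rle_dec x y then true else false.
Definition rltb (x y : R) : bool := if Rlt_dec x y then true else false.

(* floor and ceiling (Int_part x = up x - 1 is the floor of x) *)
Definition floorZ (x : R) : Z := Int_part x.
Definition ceilZ (x : R) : Z := (- Int_part (- x))%Z.

Definition p2 (k : nat) : R := / 2 ^ k.

(* For 0 < x, kk x is the unique integer k with 2^{-(k+1)} < x <= 2^{-k},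
   i.e. k = floor(-log_2 x). *)
Definition kk (x : R) : nat := Z.to_nat (Int_part (- ln x / ln 2)).

Definition inS1 (x : R) : bool := rltb (2/3) x && rleb x 1.
Definition inS2 (x : R) : bool := rltb (1/2) x && rleb x (2/3).
Definition inS3 (x : R) : bool :=
  rleb x (1/2) && rltb (2/3 * p2 (kk x)) x && rleb x (p2 (kk x)).
Definition inS4 (x : R) : bool :=
  rleb x (1/2) && rltb (p2 (S (kk x))) x && rleb x (2/3 * p2 (kk x)).

Definition h3 (x : R) : R := p2 (kk x).
Definition h4 (x : R) : R := 2/3 * p2 (kk x).

Definition idx (n : nat) : list nat := seq 1 n.
Definition setS (n : nat) (h : nat -> R) (P : R -> bool) : list nat :=
  filter (fun j => P (h j)) (idx n).
Definition sumR (l : list nat) (f : nat -> R) : R := fold_right Rplus 0 (map f l).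

Definition pi1 n h : nat := length (setS n h inS1).
Definition card2 n h : nat := length (setS n h inS2).
Definition sh3 n h : R := sumR (setS n h inS3) (fun j => h3 (h j)).
Definition sh4 n h : R := sumR (setS n h inS4) (fun j => h4 (h j)).
Definition pi3 n h : Z := floorZ (sh3 n h).
Definition pi4 n h : Z := floorZ (sh4 n h).
Definition f3 n h : R := sh3 n h - IZR (pi3 n h).
Definition f4 n h : R := sh4 n h - IZR (pi4 n h).

Definition z_a n h : R :=
  INR (pi1 n h) + INR (card2 n h) + IZR (pi3 n h) + IZR (pi4 n h)
  + IZR (ceilZ (f3 n h + f4 n h)).

(* h* = max of h over S_2 (only used when S_2 is nonempty; rates are > 0) *)
Definition hstar n h : R := fold_right Rmax 0 (map h (setS n h inS2)).
Definition f2 n h : R := if Nat.odd (card2 n h) then 1/2 else 0.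

Definition z_b n h : R :=
  2 * hstar n h *
  (INR (pi1 n h) + INR (Nat.div (card2 n h) 2) + IZR (pi3 n h) + IZR (pi4 n h)
   + IZR (ceilZ (f2 n h + f3 n h + f4 n h))).

(* H^{PW''} = min{z(a), z(b)}, with z(b) = +infinity when S_2 is empty *)
Definition H_PW (n : nat) (h : nat -> R) : R :=
  match setS n h inS2 with
  | nil => z_a n h
  | _ => Rmin (z_a n h) (z_b n h)
  end.

(* Main.v *)
Require Import Defs.
From Stdlib Require Import Reals ZArith List Lra Lia.
Open Scope R_scope.

Lemma sumR_cons a l f : sumR (a :: l) f = f a + sumR l f.
Proof. reflexivity. Qed.

Lemma sumR_filter (P : nat -> bool) l f :
  sumR (filter P l) f = sumR l (fun j => if P j then f j else 0).
Proof.
  induction l as [|a l IH]; simpl; auto.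
  unfold sumR in *. destruct (P a) eqn:E; simpl; rewrite IH, ?E; lra.
Qed.

Lemma sumR_le l f g : (forall j, In j l -> f j <= g j) -> sumR l f <= sumR l g.
Proof.
  unfold sumR; induction l as [|a l IH]; intros H; simpl. lra.
  assert (f a <= g a) by (apply H; left; auto).
  assert (fold_right Rplus 0 (map f l) <= fold_right Rplus 0 (map g l)).
  { apply IH. intros; apply H; right; auto. }
  lra.
Qed.

Lemma sumR_ext l f g : (forall j, In j l -> f j = g j) -> sumR l f = sumR l g.
Proof. intros H; apply Rle_antisym; apply sumR_le; intros j Hj; rewrite H; auto; lra. Qed.

Lemma sumR_plus5 l a b c d e :
  sumR l (fun j => a j + b j + c j + d j + e j) =
  sumR l a + sumR l b + sumR l c + sumR l d + sumR l e.
Proof.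
  unfold sumR in *; induction l as [|x l IH]; simpl. lra. rewrite IH. lra.
Qed.

Lemma sumR_plus l a b : sumR l (fun j => a j + b j) = sumR l a + sumR l b.
Proof.
  unfold sumR in *; induction l as [|x l IH]; simpl. lra. rewrite IH. lra.
Qed.

Lemma sumR_scale l c f : sumR l (fun j => c * f j) = c * sumR l f.
Proof.
  unfold sumR in *; induction l as [|x l IH]; simpl. lra. rewrite IH. lra.
Qed.

Lemma sumR_const l c : sumR l (fun _ => c) = c * INR (length l).
Proof.
  unfold sumR in *; induction l as [|x l IH]; simpl. lra. rewrite IH. destruct (length l); simpl; lra.
Qed.

Lemma sumR_nonneg l f : (forall j, In j l -> 0 <= f j) -> 0 <= sumR l f.
Proof.
  intros H. replace 0 with (sumR l (fun _ => 0)).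
  apply sumR_le; auto. rewrite sumR_const; lra.
Qed.

Lemma sumR_zero_notin s l (g : nat -> R) : ~ In s l ->
  sumR l (fun j => if Nat.eqb s j then g j else 0) = 0.
Proof.
  unfold sumR in *; induction l as [|x l IH]; intros H; simpl. lra.
  destruct (Nat.eqb s x) eqn:E.
  - apply Nat.eqb_eq in E; subst. exfalso; apply H; left; auto.
  - unfold sumR in IH. rewrite IH. lra. intro; apply H; right; auto.
Qed.

Lemma sumR_single s l (g : nat -> R) : NoDup l -> In s l ->
  sumR l (fun j => if Nat.eqb s j then g j else 0) = g s.
Proof.
  unfold sumR in *; induction l as [|x l IH]; intros Hd Hi; simpl. destruct Hi.
  inversion Hd; subst.
  destruct Hi as [Hi|Hi].
  - subst. rewrite Nat.eqb_refl. pose proof (sumR_zero_notin s l g H1).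
    unfold sumR in H. rewrite H. lra.
  - destruct (Nat.eqb s x) eqn:E.
    + apply Nat.eqb_eq in E; subst. contradiction.
    + pose proof (IH H2 Hi). unfold sumR in H. rewrite H. lra.
Qed.

Lemma sumR_remove s l (g : nat -> R) : NoDup l -> In s l ->
  sumR l (fun j => if Nat.eqb s j then 0 else g j) = sumR l g - g s.
Proof.
  intros Hd Hi.
  rewrite <- (sumR_single s l g Hd Hi).
  assert (sumR l g = sumR l (fun j => (if Nat.eqb s j then 0 else g j) +
                                       (if Nat.eqb s j then g j else 0))).
  { apply sumR_ext. intros j _. destruct (Nat.eqb s j); lra. }
  rewrite H, sumR_plus. lra.
Qed.

Lemma sum_lower n h sigma B :
  (forall j, (1 <= j)%nat -> (j <= n)%nat -> 0 < h j) ->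
  valid_schedule n sigma -> schedule_bounded_by n h sigma B ->
  sumR (idx n) h <= B.
Proof.
  intros Hpos Hs Hb.
  set (sig := sumR (idx n) h).
  set (Phi := fun t => sumR (idx n) (fun j => height_after h sigma j t)).
  assert (Hnd : NoDup (idx n)) by apply seq_NoDup.
  assert (Hin : forall j, In j (idx n) <-> (1 <= j)%nat /\ (j <= n)%nat).
  { intros j. unfold idx. rewrite in_seq. lia. }
  assert (Hstep : forall t, Phi (S t) >= Phi t + sig - B).
  { intros t. unfold Phi.
    destruct (Hs (S t)) as [H1 H2]; [lia|].
    set (s := sigma (S t)).
    assert (E: sumR (idx n) (fun j => height_after h sigma j (S t)) =
               sumR (idx n) (fun j => if Nat.eqb s j then 0 else height_after h sigma j t + h j)).
    { apply sumR_ext. intros j _. reflexivity. }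
    rewrite E, sumR_remove; auto.
    2: apply Hin; split; auto.
    rewrite sumR_plus.
    pose proof (Hb (S t) s ltac:(lia) H1 H2). unfold height_before in H. simpl in H.
    unfold sig. lra. }
  assert (Hlow : forall t, Phi t >= INR t * (sig - B)).
  { induction t.
    - unfold Phi. simpl. rewrite sumR_const. lra.
    - rewrite S_INR. pose proof (Hstep t). lra. }
  assert (Hup : forall t, Phi t <= INR n * B).
  { intros t. unfold Phi. replace (INR n) with (INR (length (idx n)))
      by (unfold idx; rewrite length_seq; auto).
    rewrite Rmult_comm, <- sumR_const. apply sumR_le.
    intros j Hj. apply Hin in Hj. destruct Hj.
    pose proof (Hb (S t) j ltac:(lia) H H0). unfold height_before in H1. simpl in H1.
    pose proof (Hpos j H H0). lra. }
  destruct (Rle_or_lt sig B) as [H|H]; auto.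
  destruct (INR_unbounded (INR n * B / (sig - B))) as [t Ht].
  pose proof (Hlow t). pose proof (Hup t).
  exfalso.
  apply Rmult_gt_compat_r with (r := sig - B) in Ht; [|lra].
  unfold Rdiv in Ht. rewrite Rmult_assoc, Rinv_l in Ht by lra. lra.
Qed.

Lemma p2_pos k : 0 < p2 k.
Proof. unfold p2. apply Rinv_0_lt_compat, pow_lt; lra. Qed.

Lemma p2S k : p2 (S k) = p2 k / 2.
Proof.
  unfold p2. simpl. pose proof (pow_lt 2 k ltac:(lra)).
  field. lra.
Qed.

Lemma pointwise (x : R) (b : bool) : 0 < x -> (b = true -> x = 1) ->
  (if inS1 x then 2/3 else 0) + (if b then 1/3 else 0) + (if inS2 x then x else 0)
  + (if inS3 x then 2/3 * h3 x else 0) + (if inS4 x then 3/4 * h4 x else 0) <= x.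
Proof.
  intros Hx Hb.
  unfold inS1, inS2, inS3, inS4, h3, h4, rltb, rleb.
  rewrite p2S. pose proof (p2_pos (kk x)). set (p := p2 (kk x)) in *.
  destruct b; [specialize (Hb eq_refl); subst x|];
  repeat match goal with |- context [Rlt_dec ?a ?b] => destruct (Rlt_dec a b) end;
  repeat match goal with |- context [Rle_dec ?a ?b] => destruct (Rle_dec a b) end;
  simpl; lra.
Qed.

Lemma h_pos n h : valid_instance n h ->
  forall j, (1 <= j)%nat -> (j <= n)%nat -> 0 < h j.
Proof.
  intros [Hn [H1 [Hm Hp]]].
  assert (forall d j, (1 <= j)%nat -> (j + d = n)%nat -> h n <= h j).
  { induction d; intros j Hj Hjd.
    - replace j with n by lia. lra.
    - pose proof (Hm j Hj ltac:(lia)). pose proof (IHd (S j) ltac:(lia) ltac:(lia)). lra. }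
  intros j Hj Hjn. pose proof (H (n - j)%nat j Hj ltac:(lia)). lra.
Qed.

Lemma ceil_bounds f : f <= IZR (ceilZ f) /\ IZR (ceilZ f) < f + 1.
Proof.
  unfold ceilZ. rewrite opp_IZR. destruct (base_Int_part (- f)). lra.
Qed.

Lemma floor_bounds r : IZR (floorZ r) <= r /\ r < IZR (floorZ r) + 1.
Proof. unfold floorZ. destruct (base_Int_part r). lra. Qed.

Theorem proposition5 (n : nat) (h : nat -> R) :
  valid_instance n h ->
  card2 n h = 2%nat ->
  (Z.of_nat (pi1 n h) + pi3 n h + pi4 n h - 1 = 1)%Z ->
  forall (sigma : nat -> nat) (B : R),
    valid_schedule n sigma ->
    schedule_bounded_by n h sigma B ->
    H_PW n h <= 360 / 193 * B.
Proof.
  intros Hv Hc2 Hz sigma B Hs Hb.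
  pose proof (h_pos n h Hv) as Hpos.
  pose proof (sum_lower n h sigma B Hpos Hs Hb) as HB.
  destruct Hv as [Hn [H1 _]].
  assert (Hnd : NoDup (idx n)) by apply seq_NoDup.
  assert (Hin1 : In 1%nat (idx n)) by (unfold idx; apply in_seq; lia).
  assert (Hsum : sumR (idx n) h >=
     2/3 * INR (pi1 n h) + 1/3 + sumR (setS n h inS2) h
     + 2/3 * sh3 n h + 3/4 * sh4 n h).
  { assert (Hle : sumR (idx n) (fun j =>
        (if inS1 (h j) then 2/3 else 0) + (if Nat.eqb 1 j then 1/3 else 0)
        + (if inS2 (h j) then h j else 0)
        + (if inS3 (h j) then 2/3 * h3 (h j) else 0)
        + (if inS4 (h j) then 3/4 * h4 (h j) else 0)) <= sumR (idx n) h).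
    { apply sumR_le. intros j Hj. unfold idx in Hj. apply in_seq in Hj.
      apply pointwise. apply Hpos; lia.
      intros E. apply Nat.eqb_eq in E. subst. auto. }
    rewrite sumR_plus5 in Hle.
    assert (E1 : sumR (idx n) (fun j => if inS1 (h j) then 2/3 else 0) = 2/3 * INR (pi1 n h)).
    { unfold pi1. rewrite <- sumR_const. unfold setS. rewrite sumR_filter. reflexivity. }
    assert (E2 : sumR (idx n) (fun j => if Nat.eqb 1 j then 1/3 else 0) = 1/3).
    { apply (sumR_single 1 (idx n) (fun _ => 1/3)); auto. }
    assert (E3 : sumR (idx n) (fun j => if inS2 (h j) then h j else 0) = sumR (setS n h inS2) h).
    { unfold setS. rewrite sumR_filter. reflexivity. }
    assert (E4 : sumR (idx n) (fun j => if inS3 (h j) then 2/3 * h3 (h j) else 0) = 2/3 * sh3 n h).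
    { unfold sh3. rewrite <- sumR_scale. unfold setS. rewrite sumR_filter. reflexivity. }
    assert (E5 : sumR (idx n) (fun j => if inS4 (h j) then 3/4 * h4 (h j) else 0) = 3/4 * sh4 n h).
    { unfold sh4. rewrite <- sumR_scale. unfold setS. rewrite sumR_filter. reflexivity. }
    lra. }
  assert (Hsh4 : 0 <= sh4 n h).
  { unfold sh4. apply sumR_nonneg. intros j _. unfold h4. pose proof (p2_pos (kk (h j))). lra. }
  unfold card2 in Hc2.
  destruct (setS n h inS2) as [|a [|b [|c l]]] eqn:ES2; simpl in Hc2; try discriminate.
  assert (Ha : inS2 (h a) = true).
  { assert (In a (setS n h inS2)) by (rewrite ES2; left; auto).
    unfold setS in H. apply filter_In in H. tauto. }
  assert (Hb2 : inS2 (h b) = true).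
  { assert (In b (setS n h inS2)) by (rewrite ES2; right; left; auto).
    unfold setS in H. apply filter_In in H. tauto. }
  assert (R2 : forall x, inS2 x = true -> 1/2 < x <= 2/3).
  { intros x. unfold inS2, rltb, rleb.
    destruct (Rlt_dec (1/2) x); destruct (Rle_dec x (2/3)); simpl; intros; try discriminate; lra. }
  apply R2 in Ha. apply R2 in Hb2.
  set (hs := hstar n h).
  assert (Hhs : 1/2 < hs <= 2/3 /\ h a + h b >= hs + 1/2).
  { unfold hs, hstar. rewrite ES2. simpl.
    unfold Rmax; repeat destruct Rle_dec; lra. }
  assert (Es2 : sumR (a :: b :: nil) h = h a + h b) by (unfold sumR; simpl; lra).
  assert (Hi : INR (pi1 n h) + IZR (pi3 n h) + IZR (pi4 n h) = 2).
  { rewrite INR_IZR_INZ, <- !plus_IZR.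
    replace (Z.of_nat (pi1 n h) + pi3 n h + pi4 n h)%Z with 2%Z by lia. reflexivity. }
  pose proof (floor_bounds (sh3 n h)) as F3.
  pose proof (floor_bounds (sh4 n h)) as F4.
  set (f := f3 n h + f4 n h).
  assert (Hf : 0 <= f < 2).
  { unfold f, f3, f4, pi3, pi4. lra. }
  assert (Hf' : sh3 n h + sh4 n h = IZR (pi3 n h) + IZR (pi4 n h) + f).
  { unfold f, f3, f4. lra. }
  set (c := ceilZ f).
  pose proof (ceil_bounds f) as Cf. fold c in Cf.
  assert (Hcz : (0 <= c <= 2)%Z).
  { split.
    - apply le_IZR. lra.
    - apply Z.lt_succ_r. apply lt_IZR. rewrite succ_IZR. lra. }
  assert (Za : z_a n h = 4 + IZR c).
  { unfold z_a. unfold card2. rewrite ES2. simpl. fold f. fold c. lra. }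
  assert (Zb : z_b n h = 2 * hs * (3 + IZR c)).
  { unfold z_b, f2. unfold card2. rewrite ES2. simpl.
    rewrite Rplus_0_l. fold f. fold c. fold hs.
    replace (INR (pi1 n h) + 1 + IZR (pi3 n h) + IZR (pi4 n h) + IZR c) with (3 + IZR c) by lra.
    reflexivity. }
  unfold H_PW. rewrite ES2, Za, Zb.
  pose proof (Rmin_l (4 + IZR c) (2 * hs * (3 + IZR c))).
  pose proof (Rmin_r (4 + IZR c) (2 * hs * (3 + IZR c))).
  set (m := Rmin (4 + IZR c) (2 * hs * (3 + IZR c))) in *.
  rewrite Es2 in Hsum.
  assert (c = 0 \/ c = 1 \/ c = 2)%Z as [E|[E|E]] by lia; rewrite E in *; simpl in *; lra.
Qed.
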